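(* Let $K_t(\omega)$ be a weighted complete graph on $[t]$. Suppose $K_t(\omega)$ contains $p$ copies of $C_5$, $q$ copies of $K_4$, $r$ copies of $K_3$ and $s$ single edges, such that all these $p+q+r+s$ subgraphs are pairwise vertex-disjoint and each of them is half (every edge of each of these subgraphs has weight $\frac12$). Then $$2g(K_t(\omega))\le 1-\frac{30}{30t-75p-72q-45r-20s}.$$
   Context: A weighted complete graph $K_t(\omega)$ is the complete graph on vertex set $[t]$ in which every edge $ij$ has a weight $\omega(i,j)\in\{\frac12,1\}$; an edge is called half if its weight is $\frac12$ and full if its weight is $1$, and a subgraph is half if all its edges are half. Its edge density is $g(K_t(\omega))=\max_{\mathbf u}\sum_{1\le i<j\le t}\omega(i,j)u_iu_j$, the maximum taken over all $\mathbf u=(u_1,\dots,u_t)$ with $u_i\ge 0$ and $\sum_i u_i=1$. *)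

(* Defs.v *)
From HB Require Import structures.
From mathcomp Require Import all_boot all_order all_algebra.
From mathcomp Require Import all_classical all_reals.
Set Implicit Arguments. Unset Strict Implicit. Unset Printing Implicit Defensive.
Import Order.TTheory GRing.Theory Num.Theory.
Local Open Scope ring_scope.
Local Open Scope classical_set_scope.

(* A weighted complete graph K_t(omega) on vertex set 'I_t (= [t]):
   omega is symmetric and every edge ij (i <> j) has weight 1/2 or 1.
   The diagonal values of omega are irrelevant. *)
Definition weighted_complete (R : realType) (t : nat) (w : 'I_t -> 'I_t -> R) :=
  (forall i j, w i j = w j i) /\
  (forall i j, i != j -> w i j = 1/2 \/ w i j = 1).

Definition in_simplex (R : realType) (t : nat) (u : 'I_t -> R) :=
  (forall i, 0 <= u i) /\ \sum_(i < t) u i = 1.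

Definition lagr (R : realType) (t : nat) (w : 'I_t -> 'I_t -> R) (u : 'I_t -> R) : R :=
  \sum_(i < t) \sum_(j < t | (i < j)%N) w i j * u i * u j.

Definition edge_density (R : realType) (t : nat) (w : 'I_t -> 'I_t -> R) : R :=
  sup [set x | exists u : 'I_t -> R, in_simplex u /\ x = lagr w u].

(* A copy of C_5 given by an (injective) vertex map f : 'I_5 -> 'I_t whose
   cycle edges f k -- f (k+1 mod 5) all have weight 1/2. *)
Definition half_C5 (R : realType) (t : nat) (w : 'I_t -> 'I_t -> R)
  (f : 'I_5 -> 'I_t) := forall k : 'I_5, w (f k) (f (ordS k)) = 1/2.

Definition half_K (R : realType) (t n : nat) (w : 'I_t -> 'I_t -> R)
  (f : 'I_n -> 'I_t) := forall k l : 'I_n, k != l -> w (f k) (f l) = 1/2.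

(* Injectivity
   of this map = each copy is a genuine subgraph and all copies are
   pairwise vertex-disjoint. *)
Definition all_vertices (t p q r s : nat)
  (c5 : 'I_p -> 'I_5 -> 'I_t) (k4 : 'I_q -> 'I_4 -> 'I_t)
  (k3 : 'I_r -> 'I_3 -> 'I_t) (k2 : 'I_s -> 'I_2 -> 'I_t)
  (x : ('I_p * 'I_5) + (('I_q * 'I_4) + (('I_r * 'I_3) + ('I_s * 'I_2))))
  : 'I_t :=
  match x with
  | inl (a, k) => c5 a k
  | inr (inl (a, k)) => k4 a k
  | inr (inr (inl (a, k))) => k3 a k
  | inr (inr (inr (a, k))) => k2 a k
  end.

(* Main.v *)
Require Import Defs.
From HB Require Import structures.
From mathcomp Require Import all_boot all_order all_algebra.
From mathcomp Require Import all_classical all_reals.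
From mathcomp Require Import ring lra.
Import Order.TTheory GRing.Theory Num.Theory.
Local Open Scope ring_scope.
Set Implicit Arguments. Unset Strict Implicit. Unset Printing Implicit Defensive.

Section Aux.
Variable R : realType.

Lemma sum_inj_le (I J : finType) (g : I -> J) (F : J -> R) :
  injective g -> (forall j, 0 <= F j) -> \sum_i F (g i) <= \sum_j F j.
Proof.
move=> ig F0.
rewrite -(big_imset F (in2W ig)) /=.
rewrite [X in _ <= X](bigID (fun j => j \in [set g i | i in I])) /=.
rewrite lerDl sumr_ge0 //.
Qed.

Lemma sumsq_shift n (x : 'I_n -> R) m :
  \sum_k (x k - m) ^+ 2 = \sum_k x k ^+ 2 - 2 * m * \sum_k x k + n%:R * m ^+ 2.
Proof.
under eq_bigr do rewrite sqrrB.
rewrite big_split /= sumrB /= sumr_const card_ord.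
rewrite sumrMnl -mulr_suml -[m ^+ 2 *+ n]mulr_natl -mulr_natl. lra.
Qed.

Lemma cauchy n (x : 'I_n -> R) :
  (\sum_k x k) ^+ 2 <= n%:R * \sum_k x k ^+ 2.
Proof.
case: n x => [|n] x; first by rewrite !big_ord0 mul0r expr2 mul0r.
have := sumsq_shift x ((\sum_k x k) / n.+1%:R).
have h0 : 0 <= \sum_k (x k - (\sum_k x k) / n.+1%:R) ^+ 2 by apply: sumr_ge0 => k _; exact: sqr_ge0.
set S := \sum_k x k; set Q := \sum_k x k ^+ 2 => E.
have hn : 0 < n.+1%:R :> R by rewrite ltr0n.
have : 0 <= Q - 2 * (S / n.+1%:R) * S + n.+1%:R * (S / n.+1%:R) ^+ 2 by rewrite -E.
have -> : Q - 2 * (S / n.+1%:R) * S + n.+1%:R * (S / n.+1%:R) ^+ 2 = Q - S^+2 / n.+1%:R.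
  by field; rewrite addrC natr1 pnatr_eq0.
by rewrite subr_ge0 ler_pdivrMr // mulrC.
Qed.

Lemma offdiag n (x : 'I_n -> R) (hc : 'I_n -> 'I_n -> R) :
  (forall k, 0 <= hc k k) -> (forall k l, k != l -> hc k l = x k * x l / 2) ->
  ((\sum_k x k) ^+ 2 - \sum_k x k ^+ 2) / 2 <= \sum_k \sum_l hc k l.
Proof.
move=> h0 h1.
rewrite expr2 mulr_suml -sumrB mulr_suml; apply: ler_sum => k _.
rewrite mulr_sumr (bigD1 k) //= [X in _ <= X](bigD1 k) //=.
have -> : \sum_(i < n | i != k) hc k i = \sum_(i < n | i != k) x k * x i / 2.
  by apply: eq_bigr => i ik; rewrite h1 // eq_sym.
rewrite -mulr_suml. have := h0 k. lra.
Qed.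


Lemma blockC5 (x : 'I_5 -> R) (hc : 'I_5 -> 'I_5 -> R) (lam : R) :
  (forall k l, 0 <= hc k l) -> (forall k, hc k (ordS k) = x k * x (ordS k) / 2) ->
  (forall k, hc (ordS k) k = x k * x (ordS k) / 2) ->
  5/2 * lam ^+ 2 <= \sum_k (x k - lam) ^+ 2 + \sum_k \sum_l hc k l.
Proof.
move=> h0 h1 h2.
have step : \sum_k (hc k (ordS k) + hc k (ord_pred k)) <= \sum_k \sum_l hc k l.
  apply: ler_sum => k _.
  rewrite (bigD1 (ordS k)) // (bigD1 (ord_pred k)) /=; last first.
    by case: k => [[|[|[|[|[|?]]]]] ?].
  by rewrite addrA lerDl sumr_ge0.
move: step; rewrite big_split /= [X in _ + X](reindex_inj (@ordS_inj 5)) /=.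
have e1 : \sum_j hc (ordS j) (ord_pred (ordS j)) = \sum_j x j * x (ordS j) / 2.
  by apply: eq_bigr => j _; rewrite ordSK h2.
have e0 : \sum_j hc j (ordS j) = \sum_j x j * x (ordS j) / 2.
  by apply: eq_bigr => j _; rewrite h1.
rewrite e0 e1 => step.
pose g k := x k ^+ 2 / 2 - lam * x k.
have E : \sum_k ((x k + x (ordS k) - lam) ^+ 2 / 2) =
   \sum_k ((x k - lam) ^+ 2 + x k * x (ordS k) / 2 + x k * x (ordS k) / 2 - lam ^+ 2 / 2)
   + \sum_k (g (ordS k) - g k).
  by rewrite -big_split; apply: eq_bigr => k _; rewrite /g /=; field.
have T : \sum_k (g (ordS k) - g k) = 0.
  by rewrite sumrB [X in _ - X](reindex_inj (@ordS_inj 5)) subrr.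
rewrite T addr0 !big_split /= sumrN sumr_const card_ord in E.
have P : 0 <= \sum_k ((x k + x (ordS k) - lam) ^+ 2 / 2).
  by apply: sumr_ge0 => k _; rewrite divr_ge0 // sqr_ge0.
move: P step; rewrite E -mulr_natl. lra.
Qed.

Lemma blockK n (x : 'I_n -> R) (hc : 'I_n -> 'I_n -> R) (lam : R) :
  (forall k, 0 <= hc k k) -> (forall k l, k != l -> hc k l = x k * x l / 2) ->
  (\sum_k x k ^+ 2 - 2 * lam * \sum_k x k + n%:R * lam ^+ 2) +
    ((\sum_k x k) ^+ 2 - \sum_k x k ^+ 2) / 2
   <= \sum_k (x k - lam) ^+ 2 + \sum_k \sum_l hc k l.
Proof.
move=> h0 h1; rewrite sumsq_shift lerD2l; exact: offdiag.
Qed.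


Lemma sym_pairs t (F : 'I_t -> 'I_t -> R) : (forall i j, F i j = F j i) ->
  \sum_i \sum_(j | j != i) F i j = 2 * \sum_(i < t) \sum_(j < t | (i < j)%N) F i j.
Proof.
move=> Fs.
have sp (i : 'I_t) : \sum_(j | j != i) F i j =
    \sum_(j < t | (i < j)%N) F i j + \sum_(j < t | (j < i)%N) F i j.
  rewrite (bigID (fun j : 'I_t => (i < j)%N)) /=; congr (_ + _); apply: eq_bigl => j;
  rewrite -val_eqE /=; by case: (ltngtP i j).
rewrite (eq_bigr _ (fun i _ => sp i)) big_split /=.
have -> : \sum_(i < t) \sum_(j < t | (j < i)%N) F i j = \sum_(i < t) \sum_(j < t | (i < j)%N) F i j.
  rewrite (eq_bigr _ (fun i _ => big_mkcond _ _)) /= exchange_big /=.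
  apply: eq_bigr => i _; rewrite [RHS]big_mkcond; apply: eq_bigr => j _.
  by rewrite Fs.
lra.
Qed.

Lemma lagr_id t (w : 'I_t -> 'I_t -> R) (u : 'I_t -> R) :
  (forall i j, w i j = w j i) -> \sum_i u i = 1 ->
  1 - 2 * lagr w u = \sum_i u i ^+ 2 +
    \sum_i \sum_j (if i == j then 0 else (1 - w i j) * u i * u j).
Proof.
move=> ws su.
have e1 : 1 = \sum_i \sum_j u i * u j.
  by rewrite -[1]mul1r -{1}su -{1}su mulr_suml; apply: eq_bigr => i _; rewrite mulr_sumr.
have e2 (i : 'I_t) : \sum_j u i * u j = u i ^+ 2 + \sum_(j | j != i) (w i j * u i * u j)
     + \sum_j (if i == j then 0 else (1 - w i j) * u i * u j).
  rewrite (bigD1 i) //= [X in _ = _ + X](bigD1 i) //= eqxx add0r.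
  rewrite -addrA -big_split /= expr2; congr (_ + _).
  apply: eq_bigr => j ji; rewrite eq_sym (negbTE ji); ring.
have e3 : 2 * lagr w u = \sum_i \sum_(j | j != i) (w i j * u i * u j).
  rewrite sym_pairs /lagr // => i j; rewrite ws; ring.
rewrite e3 {1}e1 (eq_bigr _ (fun i _ => e2 i)) !big_split /=. ring.
Qed.


Lemma dbl (m n : nat) (F : 'I_m -> 'I_n -> R) (G : 'I_m * 'I_n -> R) :
  (forall a k, G (a, k) = F a k) -> \sum_z G z = \sum_a \sum_k F a k.
Proof. by move=> e; rewrite pair_big; apply: eq_bigr => [[a k]] _; rewrite e. Qed.

Lemma trpl (m n : nat) (F : 'I_m -> 'I_n -> 'I_n -> R)
  (G : 'I_m * ('I_n * 'I_n) -> R) :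
  (forall a k l, G (a, (k, l)) = F a k l) ->
  \sum_z G z = \sum_a \sum_k \sum_l F a k l.
Proof.
move=> e; under [RHS]eq_bigr do rewrite pair_big.
by rewrite pair_big; apply: eq_bigr => [[a [k l]]] _; rewrite e.
Qed.

Lemma fam (m n : nat) (A : 'I_m -> 'I_n -> R) (B : 'I_m -> 'I_n -> 'I_n -> R) c :
  (forall a, c <= \sum_k A a k + \sum_k \sum_l B a k l) ->
  m%:R * c <= \sum_a \sum_k A a k + \sum_a \sum_k \sum_l B a k l.
Proof.
move=> h; rewrite -big_split /= mulr_natl.
rewrite -[X in c *+ X](card_ord m) -sumr_const; exact: ler_sum.
Qed.

End Aux.

Lemma main_bound (R : realType) (t p q r s : nat)
  (w : 'I_t -> 'I_t -> R)
  (c5 : 'I_p -> 'I_5 -> 'I_t) (k4 : 'I_q -> 'I_4 -> 'I_t)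
  (k3 : 'I_r -> 'I_3 -> 'I_t) (k2 : 'I_s -> 'I_2 -> 'I_t) (u : 'I_t -> R) :
  weighted_complete w ->
  injective (all_vertices c5 k4 k3 k2) ->
  (forall a, half_C5 w (c5 a)) ->
  (forall a, half_K w (k4 a)) ->
  (forall a, half_K w (k3 a)) ->
  (forall a, half_K w (k2 a)) ->
  in_simplex u ->
  2 * lagr w u <=
    1 - 30 / (30 * t%:R - 75 * p%:R - 72 * q%:R - 45 * r%:R - 20 * s%:R).
Proof.
move=> [ws wv] finj h5 h4 h3 h2 [u0 su].
set f := all_vertices c5 k4 k3 k2.
have [i0 _] : exists i : 'I_t, true.
  case: (pickP (fun _ : 'I_t => true)) => [i _|H]; first by exists i.
  by move: su; rewrite big_pred0 // => /eqP; rewrite eq_sym oner_eq0.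
have tpos : (0 < t)%N := leq_ltn_trans (leq0n _) (ltn_ord i0).
have card := @leq_card _ _ f finj.
rewrite !card_sum !card_prod !card_ord -(ler_nat R) !natrD !natrM in card.
have tR : 1 <= t%:R :> R by rewrite ler1n.
set N : R := t%:R - 5/2 * p%:R - 12/5 * q%:R - 3/2 * r%:R - 2/3 * s%:R.
have pR : 0 <= p%:R :> R := ler0n _ _.
have qR : 0 <= q%:R :> R := ler0n _ _.
have rR : 0 <= r%:R :> R := ler0n _ _.
have sR : 0 <= s%:R :> R := ler0n _ _.
have Npos : 0 < N by rewrite /N; lra.
have -> : 30 * t%:R - 75 * p%:R - 72 * q%:R - 45 * r%:R - 20 * s%:R = 30 * N.
  by rewrite /N; lra.
set lam := N^-1.
pose h i j := if i == j then 0 else (1 - w i j) * u i * u j.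
have h0 i j : 0 <= h i j.
  rewrite /h; case: eqP => [//|/eqP ij].
  rewrite -mulrA mulr_ge0 ?mulr_ge0 // subr_ge0.
  by case: (wv i j ij) => ->; lra.
have hs i j : h i j = h j i by rewrite /h eq_sym ws; case: eqP => // _; ring.
have hh i j : i != j -> w i j = 1/2 -> h i j = u i * u j / 2.
  by move=> ij e; rewrite /h (negbTE ij) e; field.
have E := lagr_id ws su.
have i5 a : injective (c5 a).
  by move=> k l e; have := @finj (inl (a, k)) (inl (a, l)) e; case.
have i4 a : injective (k4 a).
  by move=> k l e; have := @finj (inr (inl (a, k))) (inr (inl (a, l))) e; case.
have i3 a : injective (k3 a).
  by move=> k l e; have := @finj (inr (inr (inl (a, k)))) (inr (inr (inl (a, l)))) e; case.
have i2 a : injective (k2 a).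
  by move=> k l e; have := @finj (inr (inr (inr (a, k)))) (inr (inr (inr (a, l)))) e; case.
pose phi1 (y : ('I_p * ('I_5 * 'I_5)) + (('I_q * ('I_4 * 'I_4)) +
     (('I_r * ('I_3 * 'I_3)) + ('I_s * ('I_2 * 'I_2))))) :
   ('I_p * 'I_5) + (('I_q * 'I_4) + (('I_r * 'I_3) + ('I_s * 'I_2))) :=
  match y with
  | inl (a, (k, l)) => inl (a, k)
  | inr (inl (a, (k, l))) => inr (inl (a, k))
  | inr (inr (inl (a, (k, l)))) => inr (inr (inl (a, k)))
  | inr (inr (inr (a, (k, l)))) => inr (inr (inr (a, k)))
  end.
pose phi2 (y : ('I_p * ('I_5 * 'I_5)) + (('I_q * ('I_4 * 'I_4)) +
     (('I_r * ('I_3 * 'I_3)) + ('I_s * ('I_2 * 'I_2))))) :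
   ('I_p * 'I_5) + (('I_q * 'I_4) + (('I_r * 'I_3) + ('I_s * 'I_2))) :=
  match y with
  | inl (a, (k, l)) => inl (a, l)
  | inr (inl (a, (k, l))) => inr (inl (a, l))
  | inr (inr (inl (a, (k, l)))) => inr (inr (inl (a, l)))
  | inr (inr (inr (a, (k, l)))) => inr (inr (inr (a, l)))
  end.
pose psi y := (f (phi1 y), f (phi2 y)).
have psi_inj : injective psi.
  move=> y y' [/finj e1 /finj e2]; move: y y' e1 e2.
  move=> [[a [k l]]|[[a [k l]]|[[a [k l]]|[a [k l]]]]]
     [[b [k' l']]|[[b [k' l']]|[[b [k' l']]|[b [k' l']]]]] //= e1 e2; congruence.
have S1 : \sum_x (u (f x) - lam) ^+ 2 <= \sum_i (u i - lam) ^+ 2.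
  exact: (sum_inj_le (F := fun i => (u i - lam) ^+ 2) finj (fun _ => sqr_ge0 _)).
have S2 : \sum_y h (psi y).1 (psi y).2 <= \sum_i \sum_j h i j.
  rewrite pair_big /=.
  exact: (sum_inj_le (F := fun z => h z.1 z.2) psi_inj (fun z => h0 _ _)).
have D1 : \sum_x (u (f x) - lam) ^+ 2 =
    \sum_a \sum_k (u (c5 a k) - lam) ^+ 2 + (\sum_a \sum_k (u (k4 a k) - lam) ^+ 2 +
    (\sum_a \sum_k (u (k3 a k) - lam) ^+ 2 + \sum_a \sum_k (u (k2 a k) - lam) ^+ 2)).
  by rewrite !big_sumType; congr (_ + (_ + (_ + _))); apply: dbl.
have D2 : \sum_y h (psi y).1 (psi y).2 =
    \sum_a \sum_k \sum_l h (c5 a k) (c5 a l) + (\sum_a \sum_k \sum_l h (k4 a k) (k4 a l) +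
    (\sum_a \sum_k \sum_l h (k3 a k) (k3 a l) + \sum_a \sum_k \sum_l h (k2 a k) (k2 a l))).
  by rewrite !big_sumType; congr (_ + (_ + (_ + _))); apply: trpl.
have B5 a : 5/2 * lam ^+ 2 <= \sum_k (u (c5 a k) - lam) ^+ 2 +
     \sum_k \sum_l h (c5 a k) (c5 a l).
  have ne k : c5 a k != c5 a (ordS k).
    rewrite (inj_eq (i5 a)); apply/negP => /eqP /(congr1 val).
    by case: k => [[|[|[|[|[|?]]]]] ?].
  apply: (blockC5 (x := fun k => u (c5 a k)) (hc := fun k l => h (c5 a k) (c5 a l)))
    => [k l|k|k] /=; first exact: h0.
    by apply: hh; [exact: ne | exact: h5].
  by rewrite hs; apply: hh; [exact: ne | exact: h5].
have BK (n : nat) (c : 'I_n -> 'I_t) : injective c -> half_K w c ->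
   exists S Q, Q - 2 * lam * S + n%:R * lam ^+ 2 + (S ^+ 2 - Q) / 2 <=
      \sum_k (u (c k) - lam) ^+ 2 + \sum_k \sum_l h (c k) (c l)
      /\ S ^+ 2 <= n%:R * Q.
  move=> ci hK.
  exists (\sum_k u (c k)), (\sum_k u (c k) ^+ 2); split.
    apply: (blockK (x := fun k => u (c k)) (hc := fun k l => h (c k) (c l)))
      => [k|k l kl] /=; first exact: h0.
    by apply: hh; [rewrite (inj_eq ci) | exact: hK].
  exact: (cauchy (fun k => u (c k))).
have B4 a : 12/5 * lam ^+ 2 <= \sum_k (u (k4 a k) - lam) ^+ 2 +
     \sum_k \sum_l h (k4 a k) (k4 a l).
  have [S [Q [H1 H2]]] := BK 4 (k4 a) (i4 a) (h4 a).
  have := sqr_ge0 (S - 8/5 * lam); nra.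
have B3 a : 3/2 * lam ^+ 2 <= \sum_k (u (k3 a k) - lam) ^+ 2 +
     \sum_k \sum_l h (k3 a k) (k3 a l).
  have [S [Q [H1 H2]]] := BK 3 (k3 a) (i3 a) (h3 a).
  have := sqr_ge0 (S - 3/2 * lam); nra.
have B2 a : 2/3 * lam ^+ 2 <= \sum_k (u (k2 a k) - lam) ^+ 2 +
     \sum_k \sum_l h (k2 a k) (k2 a l).
  have [S [Q [H1 H2]]] := BK 2 (k2 a) (i2 a) (h2 a).
  have := sqr_ge0 (S - 4/3 * lam); nra.
have F5 := fam B5. have F4 := fam B4. have F3 := fam B3. have F2 := fam B2.
have Sh := sumsq_shift u lam; rewrite su in Sh.
have key : p%:R * (5/2 * lam ^+ 2) + q%:R * (12/5 * lam ^+ 2) + r%:R * (3/2 * lam ^+ 2)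
   + s%:R * (2/3 * lam ^+ 2) - t%:R * lam ^+ 2 = - lam.
  rewrite /lam /N; field; have := Npos; rewrite /N => Np; apply/eqP => H; lra.
have e30 : 30 / (30 * N) = lam by rewrite /lam; field; rewrite gt_eqF.
move: E; rewrite -/h => E.
lra.
Qed.

Theorem mainTheorem6 (R : realType) (t p q r s : nat)
  (w : 'I_t -> 'I_t -> R)
  (c5 : 'I_p -> 'I_5 -> 'I_t) (k4 : 'I_q -> 'I_4 -> 'I_t)
  (k3 : 'I_r -> 'I_3 -> 'I_t) (k2 : 'I_s -> 'I_2 -> 'I_t) :
  weighted_complete w ->
  injective (all_vertices c5 k4 k3 k2) ->
  (forall a, half_C5 w (c5 a)) ->
  (forall a, half_K w (k4 a)) ->
  (forall a, half_K w (k3 a)) ->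
  (forall a, half_K w (k2 a)) ->
  2 * edge_density w <=
    1 - 30 / (30 * t%:R - 75 * p%:R - 72 * q%:R - 45 * r%:R - 20 * s%:R).
Proof.
move=> wc finj h5 h4 h3 h2; rewrite /edge_density; set S := (X in sup X).
case: (posnP t) => [t0|tpos].
  have card := @leq_card _ _ _ finj.
  rewrite !card_sum !card_prod !card_ord t0 leqn0 !addn_eq0 !muln_eq0 !orbF in card.
  case/and4P: card => /eqP p0 /eqP q0 /eqP r0 /eqP s0.
  have -> : S = set0.
    apply/seteqP; split => x //= [u [[_ su] _]].
    by move: u su; rewrite t0 => u; rewrite big_ord0 => /eqP; rewrite eq_sym oner_eq0.
  rewrite sup0 t0 p0 q0 r0 s0 !mulr0 !subr0 invr0 mulr0; lra.
set M := 1 - _.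
suff : sup S <= M / 2.
  lra.
apply: ge_sup.
  exists (lagr w (fun i => (i == Ordinal tpos)%:R)), (fun i => (i == Ordinal tpos)%:R).
  split=> //; split=> [i|]; first exact: ler0n.
  by rewrite (bigD1 (Ordinal tpos)) //= big1 ?addr0 // => i /negbTE ->; rewrite mulr0n.
move=> x [u [us ->]].
have := main_bound wc finj h5 h4 h3 h2 us; rewrite -/M; lra.
Qed.
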